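(* Let $n\ge 2$, let $P=[p_1,\ldots,p_n]\neq[n,n-1,\ldots,1]$ be an arithmetically progressed permutation with ratio $k$, and let $\mathsf{T}_P$ be its associated ternary string (so that $\mathsf{SA}_{\mathsf{T}_P}=P$). Let $t\in[1..n]$ be the index with $p_t=(p_1-1-k)\bmod n$. Then for every $i\in[1..n]$, $\mathsf{BWT}_{\mathsf{T}_P}[i]=\mathsf{T}_P[P[(i+t)\bmod n]]$; that is, $\mathsf{BWT}_{\mathsf{T}_P}$ is the $t$-th cyclic rotation of the string $\mathsf{T}_P[p_1]\mathsf{T}_P[p_2]\cdots\mathsf{T}_P[p_n]$.
   Context: Alphabet $\{\mathtt{a}<\mathtt{b}<\mathtt{c}\}$, lexicographic order with a proper prefix smaller than the longer string; suffix array $\mathsf{SA}_{\mathsf{T}}$: permutation of $[1..n]$ such that $\mathsf{T}[\mathsf{SA}_{\mathsf{T}}[i]..n]$ is the $i$-th smallest suffix. $x\bmod n$ denotes the representative of $x$ modulo $n$ in $[1..n]$. An arithmetically progressed permutation of length $n$ with ratio $k\in[1..n-1]$ is a permutation $P=[p_1,\ldots,p_n]$ of $[1..n]$ with $p_{i+1}=p_i+k\bmod n$. Ternary string associated with $P$: cut $P$ immediately after the entry $n-k$ and immediately after the entry $(p_1-k-1)\bmod n$, giving consecutive possibly empty blocks $A,B,C$ with $P=ABC$; set $\mathsf{T}_P[p_i]=\mathtt{a},\mathtt{b},\mathtt{c}$ according as $p_i$ lies in $A$, $B$, $C$. BWT: $\mathsf{BWT}_{\mathsf{T}}[i]=\mathsf{T}[\mathsf{SA}_{\mathsf{T}}[i]-1\bmod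 n]$. *)

(* Defs.v *)
From mathcomp Require Import all_boot.
Set Implicit Arguments. Unset Strict Implicit. Unset Printing Implicit Defensive.

(* Strings over {a<b<c} are encoded as seq nat with a = 0, b = 1, c = 2.
   All positions/indices are 1-based, as in the paper. *)

(* x mod n, represented in [1..n] *)
Definition rep (n x : nat) : nat := if x %% n == 0 then n else x %% n.

Definition at1 (s : seq nat) (i : nat) : nat := nth 0 s i.-1.

Fixpoint lex_lt (s t : seq nat) : bool :=
  match s, t with
  | [::], [::] => false
  | [::], _ :: _ => true
  | _ :: _, [::] => false
  | x :: s', y :: t' => (x < y) || ((x == y) && lex_lt s' t')
  end.

Definition suffix (T : seq nat) (j : nat) : seq nat := drop j.-1 T.

Definition is_SA (T SA : seq nat) : Prop :=
  [/\ size SA = size T, perm_eq SA (iota 1 (size T)) &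
      forall i, 1 <= i < size T ->
        lex_lt (suffix T (at1 SA i)) (suffix T (at1 SA i.+1))].

Definition is_APperm (n k : nat) (P : seq nat) : Prop :=
  [/\ size P = n, perm_eq P (iota 1 n), 1 <= k <= n.-1 &
      forall i, 1 <= i < n -> at1 P i.+1 = rep n (at1 P i + k)].

(* the value (p_1 - k - 1) mod n *)
Definition cutval (n k : nat) (P : seq nat) : nat := rep n (at1 P 1 + 2 * n - k - 1).

(* ternary string associated with P: cut P after the entries n-k and
   (p_1-k-1) mod n (cut positions taken in increasing order), giving blocks
   A B C; T[p_i] = a/b/c according as p_i is in A/B/C. *)
Definition ternary (n k : nat) (P : seq nat) : seq nat :=
  let ja := (index (n - k) P).+1 in
  let jv := (index (cutval n k P) P).+1 in
  mkseq (fun j => let i := (index j.+1 P).+1 in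
                  if i <= minn ja jv then 0
                  else if i <= maxn ja jv then 1 else 2) n.

Definition BWT (T SA : seq nat) : seq nat :=
  mkseq (fun i => at1 T (rep (size T) (at1 SA i.+1 + size T - 1))) (size T).

(* Main.v *)
Require Import Defs.
From mathcomp Require Import all_boot zify.

Lemma rep_range n x : 0 < n -> 1 <= rep n x <= n.
Proof. move=> n0; rewrite /rep; case: eqP => [_|h]; first by rewrite n0 leqnn.
rewrite lt0n; apply/andP; split; first by apply/eqP.
by apply: ltnW; rewrite ltn_pmod. Qed.

Lemma rep_mod n x : rep n x %% n = x %% n.
Proof. rewrite /rep; case: eqP => [->|_]; by rewrite ?modnn ?modn_mod. Qed.

Lemma rep_id n x : 1 <= x <= n -> rep n x = x.
Proof. case/andP=> h1 h2; rewrite /rep; case: ltngtP h2 => // [lt _|-> _].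
  by rewrite modn_small //; case: eqP => // e; lia.
by rewrite modnn. Qed.

Lemma rep_inj n x y : 1 <= x <= n -> 1 <= y <= n -> x = y %[mod n] -> x = y.
Proof. move=> hx hy e; rewrite -(@rep_id n x hx) -(@rep_id n y hy) /rep e //. Qed.

Lemma rep_add n z k : 1 <= z <= n -> k < n ->
  rep n (z + k) = if z + k <= n then z + k else z + k - n.
Proof. move=> hz hk; case: ifP => h. apply: rep_id; lia.
have e: z + k = (z + k - n) + n by lia.
rewrite e /rep modnDr modn_small; last lia.
case: eqP => //; lia. Qed.

Set Implicit Arguments. Unset Strict Implicit.

Section AP.
Variables (n k : nat) (P : seq nat).
Hypothesis n2 : 2 <= n.
Hypothesis hP : is_APperm n k P.

Lemma sizeP : size P = n. Proof. by case: hP. Qed.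
Lemma kbound : 1 <= k < n. Proof. case: hP => _ _ h _; lia. Qed.
Lemma memP z : (z \in P) = (1 <= z <= n).
Proof. case: hP => _ pe _ _; rewrite (perm_mem pe) mem_iota; lia. Qed.
Lemma uniqP : uniq P.
Proof. case: hP => _ pe _ _; by rewrite (perm_uniq pe) iota_uniq. Qed.
Lemma p_range i : 1 <= i <= n -> 1 <= at1 P i <= n.
Proof. move=> hi; rewrite -memP /at1 mem_nth // sizeP; lia. Qed.
Lemma p_step i : 1 <= i < n -> at1 P i.+1 = rep n (at1 P i + k).
Proof. by case: hP => _ _ _ h; apply: h. Qed.

Definition I z := (index z P).+1.
Lemma I_range z : 1 <= z <= n -> 1 <= I z <= n.
Proof. rewrite -memP /I -index_mem sizeP; lia. Qed.
Lemma pI z : 1 <= z <= n -> at1 P (I z) = z.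
Proof. by rewrite -memP /I /at1 /= => h; rewrite nth_index. Qed.
Lemma Ip i : 1 <= i <= n -> I (at1 P i) = i.
Proof. move=> hi; rewrite /I /at1 index_uniq ?uniqP ?sizeP; lia. Qed.
Lemma I_inj z y : 1 <= z <= n -> 1 <= y <= n -> I z = I y -> z = y.
Proof. by move=> hz hy e; rewrite -(pI hz) -(pI hy) e. Qed.

Lemma p_mod i : 1 <= i <= n -> at1 P i = at1 P 1 + (i - 1) * k %[mod n].
Proof.
elim: i => [|i IH] hi; first lia.
case: (posnP i) => [->|ip]; first by rewrite mul0n addn0.
rewrite p_step; last lia.
rewrite rep_mod -modnDml IH; last lia.
rewrite modnDml -addnA; congr ((_ + _) %% _); rewrite subn1 -[in RHS](prednK ip) mulSn; lia.
Qed.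

Lemma I_step z : 1 <= z <= n -> I z < n -> I (rep n (z + k)) = (I z).+1.
Proof. move=> hz hl; have := I_range hz => hr.
by rewrite -(pI hz) -p_step ?Ip //; lia. Qed.

End AP.

Definition F (ja jv i : nat) := if i <= minn ja jv then 0 else if i <= maxn ja jv then 1 else 2.
Lemma F_lt ja jv i : 1 <= ja -> 1 <= jv -> (i = ja \/ i = jv) -> F ja jv i < F ja jv i.+1.
Proof. rewrite /F => *; repeat case: ifP; lia. Qed.
Lemma F_eq ja jv i : i <> ja -> i <> jv -> F ja jv i = F ja jv i.+1.
Proof. rewrite /F => *; repeat case: ifP; lia. Qed.

Section Key.
Variables (n k : nat) (P : seq nat).
Hypothesis n2 : 2 <= n.
Hypothesis hP : is_APperm n k P.
Let T := ternary n k P.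
Let ja := I P (n - k).
Let jv := I P (cutval n k P).
Let c0 := cutval n k P.

Lemma sizeT : size T = n. Proof. by rewrite size_mkseq. Qed.
Lemma T_at z : 1 <= z <= n -> at1 T z = F ja jv (I P z).
Proof. move=> hz; rewrite /at1 /T /ternary nth_mkseq; last lia.
rewrite prednK; last lia. by []. Qed.

Lemma c0_range : 1 <= c0 <= n. Proof. apply: rep_range; lia. Qed.

Lemma c0_succ z : 1 <= z -> z < n -> z.+1 = at1 P n -> z = c0.
Proof.
move=> h1 h2 e; apply: (@rep_inj n) => //; first lia; first exact: c0_range.
apply/eqP; rewrite -(eqn_modDr 1) !addn1 e (p_mod n2 hP); last lia.
rewrite /c0 /cutval -[(rep _ _).+1]addn1 -(modnDml (rep n _)) rep_mod modnDml.
have [hk1 hk2] : 1 <= k /\ k < n by have := kbound n2 hP; lia.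
have hp := p_range n2 hP (i:=1) ltac:(lia).
rewrite -(eqn_modDr k).
have -> : at1 P 1 + 2 * n - k - 1 + 1 + k = at1 P 1 + 2 * n by lia.
have -> : at1 P 1 + (n - 1) * k + k = at1 P 1 + k * n.
  by rewrite -addnA -{2}(mul1n k) -mulnDl subnK; lia.
by rewrite !(addnC (at1 P 1)) !modnMDl.
Qed.

Lemma suffix_cons z : 1 <= z <= n -> Defs.suffix T z = at1 T z :: drop z T.
Proof. move=> hz; rewrite /Defs.suffix (drop_nth 0); last by rewrite sizeT; lia.
rewrite prednK; last lia. by []. Qed.

Lemma key_step z : 1 <= z <= n -> z <> at1 P n ->
  (z < n -> z.+1 <> at1 P n -> lex_lt (Defs.suffix T z.+1) (Defs.suffix T (rep n (z.+1 + k)))) ->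
  lex_lt (Defs.suffix T z) (Defs.suffix T (rep n (z + k))).
Proof.
move=> hz hzn IH.
have [hk1 hk2] : 1 <= k /\ k < n by have := kbound n2 hP; lia.
have hIz := I_range n2 hP hz.
have hIn : I P z < n.
  case: (ltngtP (I P z) n) => //; first lia.
  by move=> e; exfalso; apply: hzn; rewrite -e (pI n2 hP).
set w := rep n (z + k).
have hw : 1 <= w <= n by apply: rep_range; lia.
have hIw : I P w = (I P z).+1 by apply: I_step.
rewrite (suffix_cons hz) (suffix_cons hw) /= (T_at hz) (T_at hw) hIw.
have hja : 1 <= ja by rewrite /ja /I.
have hjv : 1 <= jv by rewrite /jv /I.
have hnk : 1 <= n - k <= n by lia.
case: (eqVneq z (n - k)) => [ez|nz].
  by rewrite F_lt //; left; rewrite ez.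
case: (eqVneq z c0) => [ez|nc].
  by rewrite F_lt //; right; rewrite ez.
rewrite -F_eq ?eqxx ?ltnn /=; first last.
- move=> e; move/eqP: nc; apply; apply: (I_inj n2 hP) => //; exact: c0_range.
- move=> e; move/eqP: nz; apply; exact: (I_inj n2 hP).
case: (ltngtP z n) => [lzn|gzn|ezn]; last first.
  have -> : w = k by rewrite /w rep_add //; case: ifP; lia.
  rewrite ezn (drop_oversize (s:=T)) ?sizeT // (drop_nth 0) ?sizeT //.
  by exfalso; lia.
have hz1 : z.+1 <> at1 P n by move=> e; move/eqP: nc; apply; apply: (c0_succ _ lzn e); lia.
have := IH lzn hz1.
have hz' : 1 <= z.+1 <= n by lia.
have -> : rep n (z.+1 + k) = w.+1.
  rewrite /w (@rep_add n _ k hz' hk2) (@rep_add n _ k hz hk2).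
  case: ifP; case: ifP; lia.
rewrite /Defs.suffix /=. done.
Qed.

Lemma key z : 1 <= z <= n -> z <> at1 P n ->
  lex_lt (Defs.suffix T z) (Defs.suffix T (rep n (z + k))).
Proof.
move: {2}(n - z) (erefl (n - z)) => m.
elim: m z => [|m IH] z hm hz hzn; apply: key_step => // lzn h1; first lia.
apply: IH => //; lia.
Qed.

Lemma P_sorted i : 1 <= i < n ->
  lex_lt (Defs.suffix T (at1 P i)) (Defs.suffix T (at1 P i.+1)).
Proof.
move=> hi; rewrite (p_step hP) //; apply: key; first by apply: (p_range n2 hP); lia.
move=> e; have := Ip n2 hP (i:=i) ltac:(lia); rewrite e (Ip n2 hP); lia.
Qed.

Lemma arith i t : 1 <= i <= n -> 1 <= t <= n -> at1 P t = c0 ->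
  rep n (at1 P i + n - 1) = at1 P (rep n (i + t)).
Proof.
move=> hi ht hpt.
have [hk1 hk2] : 1 <= k /\ k < n by have := kbound n2 hP; lia.
have n0 : 0 < n by lia.
set r := rep n (i + t).
have hr : 1 <= r <= n by apply: rep_range.
have hpi := p_range n2 hP hi.
have hpr := p_range n2 hP hr.
have htk : (t * k + 1) %% n = 0.
  move: hpt; rewrite /c0 /cutval => /(congr1 (fun x => x %% n)).
  rewrite rep_mod (p_mod n2 hP) // => /eqP.
  rewrite -(eqn_modDr (k + 1)).
  have -> : at1 P 1 + (t - 1) * k + (k + 1) = at1 P 1 + (t * k + 1).
    nia.
  have hp1 := p_range n2 hP (i:=1) ltac:(lia).
  have -> : at1 P 1 + 2 * n - k - 1 + (k + 1) = at1 P 1 + n * 2 by lia.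
  by rewrite eqn_modDl modnMr => /eqP.
apply: (@rep_inj n); [by apply: rep_range | by [] |].
rewrite rep_mod; apply/eqP; rewrite -(eqn_modDr 1).
have -> : at1 P i + n - 1 + 1 = at1 P i + n by lia.
rewrite modnDr (p_mod n2 hP hi) -(modnDml (at1 P r)) (p_mod n2 hP hr) modnDml -addnA eqn_modDl.
rewrite -(eqn_modDr k).
have -> : (i - 1) * k + k = i * k by nia.
have -> : (r - 1) * k + 1 + k = r * k + 1 by nia.
rewrite -modnDml -(modnMml r) /r rep_mod modnMml modnDml mulnDl -addnA -modnDmr htk addn0.
by [].
Qed.
End Key.

Lemma lex_irr : irreflexive lex_lt.
Proof. by elim=> [|x s IH] //=; rewrite ltnn eqxx IH. Qed.

Lemma lex_trans : transitive lex_lt.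
Proof.
move=> t s u; elim: s t u => [|x s IH] [|y t] [|z u] //=.
case/orP=> [h1|/andP[/eqP e1 h1]]; case/orP=> [h2|/andP[/eqP e2 h2]].
- by rewrite (ltn_trans h1 h2).
- by rewrite -e2 h1.
- by rewrite e1 h2.
- by rewrite e1 -e2 eqxx (IH _ _ h1 h2) orbT.
Qed.

Lemma suffix_inj T a b : 1 <= a <= size T -> 1 <= b <= size T ->
  Defs.suffix T a = Defs.suffix T b -> a = b.
Proof. move=> ha hb /(congr1 size); rewrite /Defs.suffix !size_drop; lia. Qed.

Unset Implicit Arguments. Set Strict Implicit.

Theorem lemma5 (n k : nat) (P SA : seq nat) :
  2 <= n ->
  is_APperm n k P ->
  P <> rev (iota 1 n) ->
  is_SA (ternary n k P) SA ->
  forall t, 1 <= t <= n -> at1 P t = cutval n k P ->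
  forall i, 1 <= i <= n ->
    at1 (BWT (ternary n k P) SA) i = at1 (ternary n k P) (at1 P (rep n (i + t))).
Proof.
move=> n2 hP _ [hsz hpe hsort] t ht hpt i hi.
have sT := sizeT n k P.
rewrite sT in hsz hpe hsort.
have szP := sizeP hP.
set T := ternary n k P in sT hsort *.
have eSA : SA = P.
  have hm : map (Defs.suffix T) SA = map (Defs.suffix T) P.
    apply: (irr_sorted_eq lex_trans lex_irr).
    - apply/(sortedP [::]) => j; rewrite size_map hsz => hj.
      rewrite !(nth_map 0) ?hsz; try lia.
      by have := hsort j.+1 ltac:(lia).
    - apply/(sortedP [::]) => j; rewrite size_map szP => hj.
      rewrite !(nth_map 0) ?szP; try lia.
      by have := P_sorted n2 hP (i:=j.+1) ltac:(lia).
    - apply: perm_mem; apply: perm_map.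
      apply: (perm_trans hpe); rewrite perm_sym; by case: hP.
  apply: (@eq_from_nth _ 0); first by rewrite hsz szP.
  move=> j; rewrite hsz => hj.
  have := congr1 (fun s => nth [::] s j) hm; rewrite !(nth_map 0) ?hsz ?szP //.
  apply: suffix_inj; rewrite sT.
  + have : nth 0 SA j \in SA by apply: mem_nth; rewrite hsz.
    by rewrite (perm_mem hpe) mem_iota; lia.
  + have : nth 0 P j \in P by apply: mem_nth; rewrite szP.
    by rewrite (memP n2 hP).
rewrite /BWT /at1 nth_mkseq sT; last lia.
rewrite eSA; congr (nth 0 T (_).-1); exact: (arith n2 hP hi ht hpt).
Qed.
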